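(* Let $n>2$ be an integer, $a\in\mathbb{R}$ with $a\ne0$, $b\in\{1,-1\}$ and $c\in\mathbb{R}$. Let $M=m_n(a,b,c)$ be the $(n+1)\times(n+1)$ symmetric matrix with rows/columns indexed $0,\dots,n$, $(0,0)$-entry $-nc$, $(0,j)$- and $(j,0)$-entries $b$ for $j=1,\dots,n$, and lower-right $n\times n$ block the circulant $\mathrm{circ}(c,a,0,\dots,0,a)$ (diagonal $c$, entries $a$ at positions $(j,j')$ with $j'\equiv j\pm1\pmod n$, zeros elsewhere). Put $\varphi=2\pi/n$, $q=\lfloor n/2\rfloor$ and \[c_k=\frac{4a^2\cos(k\varphi)\bigl(1-\cos(k\varphi)\bigr)+n}{2(n+1)a\bigl(\cos(k\varphi)-1\bigr)},\qquad k=1,\dots,q.\] Then the number of distinct eigenvalues of $M$ is \[|\sigma(M)|=\begin{cases}\lfloor n/2\rfloor+1,& \text{if } c\in\{c_1,\dots,c_q\},\\ \lfloor n/2\rfloor+2,&\text{otherwise.}\end{cases}\] *)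

(* Defs.v *)
From HB Require Import structures.
From mathcomp Require Import all_boot all_order all_algebra.
From mathcomp Require Import all_classical all_reals all_analysis.
Set Implicit Arguments. Unset Strict Implicit. Unset Printing Implicit Defensive.
Import Order.TTheory GRing.Theory Num.Theory.
Local Open Scope ring_scope.

(* Index 0 is the special row;
   indices 1..n carry the circulant circ(c,a,0,...,0,a), with row/column j
   (1<=j<=n) corresponding to circulant position j-1 (mod n). *)
Definition mmat (R : ringType) (n : nat) (a b c : R) : 'M[R]_(n.+1) :=
  \matrix_(i < n.+1, j < n.+1)
    if (i == 0%N :> nat) && (j == 0%N :> nat) then - (n%:R * c)
    else if (i == 0%N :> nat) || (j == 0%N :> nat) then b
    else if i == j then c
    else if ((i.-1).+1 %% n == j.-1)%N || ((j.-1).+1 %% n == i.-1)%N then a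
    else 0.

Definition ck (R : realType) (n : nat) (a : R) (k : nat) : R :=
  let ckp := cos (k%:R * (2 * pi / n%:R)) in
  (4 * a ^+ 2 * ckp * (1 - ckp) + n%:R) /
  (2 * (n%:R + 1) * a * (ckp - 1)).

Definition num_distinct_eigenvalues (F : fieldType) (N : nat) (M : 'M[F]_N)
    (m : nat) : Prop :=
  exists s : seq F, [/\ uniq s, (forall x, eigenvalue M x <-> x \in s)
                    & size s = m].

(* Main.v *)
Require Import Defs.
From HB Require Import structures.
From mathcomp Require Import all_boot all_order all_algebra.
From mathcomp Require Import all_classical all_reals all_analysis.
From mathcomp Require Import ring lra zify.
Import Order.TTheory GRing.Theory Num.Theory.
Local Open Scope ring_scope.

Section Trig.
Variable R : realType.

Lemma cosDk (x : R) (k : nat) : cos (x + k%:R * (2 * pi)) = cos x.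
Proof.
rewrite -[RHS](periodicn (@cosD2pi R) k); congr cos.
rewrite -mulr_natl; ring.
Qed.

Lemma sinDk (x : R) (k : nat) : sin (x + k%:R * (2 * pi)) = sin x.
Proof.
rewrite -[RHS](periodicn (@sinD2pi R) k); congr sin.
rewrite -mulr_natl; ring.
Qed.

Lemma sum_cos0 (n r : nat) (th : R) : (0 < r < n)%N ->
  \sum_(0 <= j < n) cos (j%:R * (r%:R * (2 * pi / n%:R)) + th) = 0.
Proof.
move=> /andP[r0 rn].
have n0 : (0 < n)%N by apply: leq_trans rn.
have nR : n%:R != 0 :> R by rewrite pnatr_eq0 -lt0n.
set al := r%:R * (2 * pi / n%:R).
have s0 : sin (al / 2) != 0.
  apply/lt0r_neq0/sin_gt0_pi; apply/andP; split.
    rewrite /al divr_gt0 // mulr_gt0 ?ltr0n // divr_gt0 ?ltr0n //.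
    by rewrite mulr_gt0 // pi_gt0.
  have -> : al / 2 = pi * (r%:R / n%:R) by rewrite /al; field.
  rewrite gtr_pMr ?pi_gt0 // ltr_pdivrMr ?ltr0n // mul1r ltr_nat //.
apply: (mulfI s0); rewrite mulr0 mulr_sumr.
pose G (j : nat) := sin (j%:R * al + th - al / 2).
have -> : \sum_(0 <= j < n) sin (al / 2) * cos (j%:R * al + th) =
          \sum_(0 <= j < n) (G j.+1 - G j) / 2.
  apply: eq_bigr => j _; rewrite /G.
  have -> : j.+1%:R * al + th - al / 2 = (j%:R * al + th) + al / 2.
    by rewrite -addn1 natrD; field.
  by rewrite sinD sinB; field.
rewrite -mulr_suml telescope_sumr // /G.
have -> : n%:R * al + th - al / 2 = (th - al / 2) + r%:R * (2 * pi).
  rewrite /al; field; done.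
by rewrite sinDk mul0r add0r subrr mul0r.
Qed.
End Trig.

Section Mat.
Variables (R : realType) (n : nat) (a b c : R).
Hypothesis n2 : (2 < n)%N.

Definition prv (q : nat) := ((q + (n - 1)) %% n)%N.
Definition nxt (q : nat) := (q.+1 %% n)%N.

Lemma nxtE q : (q < n)%N -> (q.+1 %% n = if q.+1 == n then 0 else q.+1)%N.
Proof. move=> qn; case: eqP => [->|ne]; first by rewrite modnn. by rewrite modn_small; lia. Qed.
Lemma prvE q : (q < n)%N -> ((q + (n - 1)) %% n = if q == 0 then n - 1 else q - 1)%N.
Proof. move=> qn; case: eqP => [->|ne]; first by rewrite add0n modn_small; lia.
have -> : (q + (n - 1) = (q - 1) + n)%N by lia.
by rewrite modnDr modn_small; lia. Qed.

Ltac cases := repeat (case: ifP => /eqP ?).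

Lemma mmat_ll (p q : 'I_n) : mmat n a b c (lift ord0 p) (lift ord0 q) =
  c * (p == q :> nat)%:R + a * (p == prv q :> nat)%:R + a * (p == nxt q :> nat)%:R.
Proof.
rewrite mxE !lift0 /= (inj_eq (@lift_inj _ ord0)).
have lp := ltn_ord p; have lq := ltn_ord q.
have H1 : (p.+1 %% n == q)%N = (p == prv q :> nat).
  by rewrite /prv (nxtE _ lp) (prvE _ lq); cases; apply/eqP/eqP; lia.
have H2 : (q.+1 %% n == p)%N = (p == nxt q :> nat).
  by rewrite /nxt (nxtE _ lq); cases; apply/eqP/eqP; lia.
rewrite H1 H2 (_ : (p == q) = (p == q :> nat)) //.
have [e1|e1] := eqVneq (p : nat) q.
  have -> : (p == prv q :> nat) = false by apply/eqP; rewrite /prv (prvE _ lq); cases; lia.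
  have -> : (p == nxt q :> nat) = false by apply/eqP; rewrite /nxt (nxtE _ lq); cases; lia.
  by rewrite !mulr0 !addr0 mulr1.
rewrite mulr0 add0r.
have [e2|e2] := eqVneq (p : nat) (prv q).
  have -> : (p == nxt q :> nat) = false by apply/eqP; move: e2; rewrite /prv /nxt (nxtE _ lq) (prvE _ lq); cases; lia.
  by rewrite mulr1 mulr0 addr0.
by rewrite mulr0 add0r; case: eqP; rewrite ?mulr1 ?mulr0.
Qed.

Lemma sum_ind (f : nat -> R) (r : nat) : (r < n)%N ->
  \sum_(p < n) f p * (p == r :> nat)%:R = f r.
Proof.
move=> rn; rewrite (bigD1 (Ordinal rn)) //= eqxx mulr1 big1 ?addr0 //.
move=> i ne; have -> : (nat_of_ord i == r) = (i == Ordinal rn) by [].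
by rewrite (negbTE ne) mulr0.
Qed.

Lemma prv_lt q : (prv q < n)%N. Proof. rewrite /prv ltn_mod; lia. Qed.
Lemma nxt_lt q : (nxt q < n)%N. Proof. rewrite /nxt ltn_mod; lia. Qed.

Lemma circ_sum (f : nat -> R) (q : 'I_n) :
  \sum_(p < n) f p * mmat n a b c (lift ord0 p) (lift ord0 q) =
  c * f q + a * f (prv q) + a * f (nxt q).
Proof.
under eq_bigr => p _ do rewrite mmat_ll !mulrDr !mulrA ![f p * _]mulrC -!mulrA.
rewrite !big_split /= -!mulr_sumr !sum_ind //; [exact: nxt_lt|exact: prv_lt].
Qed.

Definition fv (v : 'rV[R]_n.+1) (p : nat) := v 0 (inord p.+1).

Lemma fvE (v : 'rV[R]_n.+1) (p : 'I_n) : v 0 (lift ord0 p) = fv v p.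
Proof. by rewrite /fv; congr (v 0 _); apply/val_inj; rewrite /= inordK ?ltnS. Qed.

Lemma col0 (v : 'rV[R]_n.+1) : (v *m mmat n a b c) 0 ord0 =
  v 0 ord0 * - (n%:R * c) + b * \sum_(p < n) fv v p.
Proof.
rewrite mxE big_ord_recl mxE /= mulr_sumr; congr (_ + _).
by apply: eq_bigr => p _; rewrite mxE lift0 /= fvE mulrC.
Qed.

Lemma colS (v : 'rV[R]_n.+1) (q : 'I_n) : (v *m mmat n a b c) 0 (lift ord0 q) =
  v 0 ord0 * b + (c * fv v q + a * fv v (prv q) + a * fv v (nxt q)).
Proof.
rewrite mxE big_ord_recl mxE lift0 /=; congr (_ + _).
by rewrite -circ_sum; apply: eq_bigr => p _; rewrite fvE.
Qed.

Lemma mmat_sym : (mmat n a b c)^T = mmat n a b c.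
Proof.
apply/matrixP => i j; rewrite !mxE andbC (orbC (j == 0%N :> nat)) (eq_sym j i).
by rewrite (orbC (_ == j.-1)%N).
Qed.

Definition phi : R := 2 * pi / n%:R.
Definition mu (k : nat) := c + 2 * a * cos (k%:R * phi).
Definition Q (x : R) := (x + n%:R * c) * (x - c - 2 * a) - n%:R.
Definition G (k m p : nat) := cos (k%:R * ((p%:R - m%:R) * phi)).
Definition uvec (k m : nat) : 'rV[R]_n.+1 :=
  \row_(i < n.+1) (if i == 0%N :> nat then 0 else G k m i.-1).

Lemma nR : n%:R != 0 :> R.
Proof. by rewrite pnatr_eq0; apply/eqP; lia. Qed.

Lemma nphi : n%:R * phi = 2 * pi.
Proof. by rewrite /phi; field; exact: nR. Qed.

Lemma Gper (k : nat) (x : R) : cos (k%:R * ((x + n%:R) * phi)) = cos (k%:R * (x * phi)).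
Proof.
rewrite -[RHS](@cosDk R _ k); congr cos.
by rewrite mulrDl nphi mulrDr.
Qed.

Lemma fv_uvec k m (p : nat) : (p < n)%N -> fv (uvec k m) p = G k m p.
Proof. by move=> pn; rewrite /fv mxE inordK ?ltnS. Qed.

Lemma G_neigh k m (q : nat) : (q < n)%N ->
  G k m (prv q) + G k m (nxt q) = 2 * cos (k%:R * phi) * G k m q.
Proof.
move=> qn; set X := (q%:R - m%:R : R).
have -> : G k m (prv q) = cos (k%:R * ((X - 1) * phi)).
  rewrite /G /prv (prvE _ qn); case: ifP => /eqP q0.
    rewrite -Gper; congr cos; rewrite /X q0 natrB; last by lia.
    by congr (_ * (_ * _)); ring.
  by rewrite natrB; last lia; rewrite /X; congr cos; ring.
have -> : G k m (nxt q) = cos (k%:R * ((X + 1) * phi)).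
  rewrite /G /nxt (nxtE _ qn); case: ifP => /eqP q0.
    by rewrite -[LHS]Gper; congr cos; rewrite /X -q0 -addn1 natrD; ring.
  by rewrite /X -addn1 natrD; congr cos; ring.
have -> : k%:R * ((X - 1) * phi) = k%:R * (X * phi) - k%:R * phi by ring.
have -> : k%:R * ((X + 1) * phi) = k%:R * (X * phi) + k%:R * phi by ring.
by rewrite cosB cosD /G -/X; ring.
Qed.

Lemma sumG0 k m : (0 < k < n)%N -> \sum_(p < n) G k m p = 0.
Proof.
move=> kn; rewrite -(big_mkord xpredT (G k m)).
rewrite -[RHS](@sum_cos0 R n k (k%:R * (- m%:R * phi)) kn).
apply: eq_bigr => p _; rewrite /G /phi; congr cos; ring.
Qed.

Lemma u_eig k m : (0 < k < n)%N -> uvec k m *m mmat n a b c = mu k *: uvec k m.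
Proof.
move=> kn; apply/rowP => j; rewrite [RHS]mxE.
have u0 : uvec k m 0 ord0 = 0 by rewrite mxE.
case: (unliftP ord0 j) => [q ->|->].
  rewrite colS // u0 !fv_uvec ?prv_lt ?nxt_lt //; try lia.
  rewrite fvE // fv_uvec // /mu.
  move: (@G_neigh k m q (ltn_ord q)) => H.
  transitivity (c * G k m q + a * (G k m (prv q) + G k m (nxt q))); first ring.
  by rewrite H; ring.
rewrite col0 // u0.
rewrite (eq_bigr (fun p : 'I_n => G k m p)); last by move=> p _; rewrite fv_uvec.
by rewrite sumG0 // mulr0 mul0r addr0 mulr0.
Qed.

Definition qvec x : 'rV[R]_n.+1 :=
  \row_(i < n.+1) (if i == 0%N :> nat then x - c - 2 * a else b).

Lemma q_eig x : b * b = 1 -> Q x = 0 -> qvec x *m mmat n a b c = x *: qvec x.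
Proof.
move=> bb HQ; apply/rowP => j; rewrite [RHS]mxE.
have u0 : qvec x 0 ord0 = x - c - 2 * a by rewrite mxE.
have fq p : (p < n)%N -> fv (qvec x) p = b.
  by move=> pn; rewrite /fv mxE inordK ?ltnS.
case: (unliftP ord0 j) => [q ->|->].
  rewrite colS u0 !fq ?prv_lt ?nxt_lt // fvE fq //; ring.
rewrite col0 u0 (eq_bigr (fun=> b)); last by move=> p _; rewrite fq.
rewrite sumr_const card_ord (_ : b * (b *+ n) = (b * b) *+ n) ?mulrnAr // bb.
have : (x - c - 2 * a) * - (n%:R * c) + n%:R - x * (x - c - 2 * a) = - Q x.
  by rewrite /Q; ring.
by rewrite HQ oppr0 => /subr0_eq.
Qed.

Lemma ksum p m : (p < n)%N -> (m < n)%N ->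
  \sum_(1 <= k < n) G k m p = n%:R * (p == m)%:R - 1.
Proof.
move=> pn mn.
have full : p != m -> \sum_(0 <= k < n) G k m p = 0.
  move=> ne; case: (ltngtP p m) => [lt|gt|eq].
  - rewrite -[RHS](@sum_cos0 R n (m - p) 0); last lia.
    apply: eq_bigr => k _; rewrite /G -cosN; congr cos.
    rewrite natrB; last lia. rewrite /phi; ring.
  - rewrite -[RHS](@sum_cos0 R n (p - m) 0); last lia.
    apply: eq_bigr => k _; rewrite /G; congr cos.
    rewrite natrB; last lia. rewrite /phi; ring.
  - by rewrite eq eqxx in ne.
case: eqVneq => [->|ne].
  rewrite (eq_bigr (fun=> 1)); last by move=> k _; rewrite /G subrr mul0r mulr0 cos0.
  rewrite sumr_const_nat mulr1 natrB //; lia.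
rewrite mulr0 add0r.
have := full ne; rewrite big_ltn; last lia.
have -> : G 0 m p = 1 by rewrite /G mul0r cos0.
move=> H; lra.
Qed.

Lemma eig_C x (v : 'rV[R]_n.+1) : b * b = 1 -> v *m mmat n a b c = x *: v -> v != 0 ->
  (forall k, (0 < k < n)%N -> x != mu k) -> Q x = 0.
Proof.
move=> bb Hv vn0 Hk.
have S1 k m : (0 < k < n)%N -> \sum_(p < n) fv v p * G k m p = 0.
  move=> kn.
  have E := @u_eig k m kn.
  have : (v *m mmat n a b c) *m (uvec k m)^T = mu k *: (v *m (uvec k m)^T).
    by rewrite -mulmxA -{1}mmat_sym -trmx_mul E linearZ /= scalemxAr.
  rewrite Hv -scalemxAl => /(congr1 (fun A : 'M[R]_1 => A 0 0)); rewrite !mxE => /eqP.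
  rewrite -subr_eq0 -mulrBl mulf_eq0 subr_eq0 (negbTE (Hk _ kn)) /= => /eqP.
  rewrite big_ord_recl !mxE /= mulr0 add0r => H; apply: (eq_trans _ H).
  by apply: eq_bigr => p _; rewrite !mxE lift0 /= fvE.
have S2 m : (m < n)%N -> n%:R * fv v m = \sum_(p < n) fv v p.
  move=> mn.
  have : \sum_(1 <= k < n) \sum_(p < n) fv v p * G k m p = 0.
    rewrite big_nat_cond; apply: big1 => k /andP[/andP[k1 kn] _]; apply: S1; lia.
  rewrite exchange_big /=.
  rewrite (eq_bigr (fun p : 'I_n => fv v p * (n%:R * (p == m :> nat)%:R - 1))); last first.
    by move=> p _; rewrite -mulr_sumr ksum.
  under eq_bigr do rewrite mulrBr mulr1 mulrCA.
  rewrite sumrB -mulr_sumr sum_ind // => H; lra.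
have n0 : (0 < n)%N by lia.
set T := \sum_(p < n) fv v p.
set t := T / n%:R.
have fm m : (m < n)%N -> fv v m = t.
  by move=> mn; apply: (mulfI nR); rewrite S2 // /t mulrC divfK // nR.
have Tn : T = n%:R * t by rewrite /t mulrC divfK // nR.
set v0 := v 0 ord0.
have E0 := congr1 (fun A : 'rV[R]_n.+1 => A 0 ord0) Hv.
rewrite /= col0 mxE -/T -/v0 Tn in E0.
have E1 := congr1 (fun A : 'rV[R]_n.+1 => A 0 (lift ord0 (Ordinal n0))) Hv.
rewrite /= colS mxE !fm ?prv_lt ?nxt_lt // fvE fm // -/v0 in E1.
have e0 : v0 * - (n%:R * c) + b * (n%:R * t) - x * v0 = 0 by rewrite E0 subrr.
have e1 : v0 * b + (c * t + a * t + a * t) - x * t = 0 by rewrite E1 subrr.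
have key : Q x * t = 0.
  have -> : Q x * t = - (x + n%:R * c) * (v0 * b + (c * t + a * t + a * t) - x * t)
     - b * (v0 * - (n%:R * c) + b * (n%:R * t) - x * v0) + n%:R * t * (b * b - 1).
    by rewrite /Q; ring.
  by rewrite e0 e1 bb subrr !mulr0 subr0 addr0.
move/eqP: key; rewrite mulf_eq0 => /orP[/eqP //|/eqP t0].
exfalso; move/negP: vn0; apply; apply/eqP/rowP => i; rewrite mxE.
have b0 : b != 0 by apply/eqP => b0; move: bb; rewrite b0 mulr0 => /eqP; rewrite eq_sym oner_eq0.
case: (unliftP ord0 i) => [q ->|->].
  by rewrite fvE fm.
rewrite -/v0; move: e1; rewrite t0 !mulr0 !addr0 subr0 => /eqP.
by rewrite mulf_eq0 (negbTE b0) orbF => /eqP.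
Qed.
Lemma mu_sym k : (k < n)%N -> mu (n - k) = mu k.
Proof.
move=> kn; rewrite /mu natrB ?(ltnW kn) //.
have -> : (n%:R - k%:R) * phi = - (k%:R * phi) + 1%:R * (2 * pi).
  by rewrite mulrBl nphi; ring.
by rewrite cosDk cosN.
Qed.

Lemma phi_gt0 : 0 < phi.
Proof. by rewrite /phi divr_gt0 ?mulr_gt0 ?pi_gt0 // ltr0n; lia. Qed.

Lemma kphi_in k : (k <= n./2)%N -> k%:R * phi \in `[0, pi].
Proof.
move=> kq; rewrite in_itv /=; apply/andP; split.
  by rewrite mulr_ge0 // ltW // phi_gt0.
have -> : k%:R * phi = pi * ((k * 2)%:R / n%:R).
  by rewrite /phi natrM; field; exact: nR.
rewrite ler_piMr ?pi_ge0 // ler_pdivrMr ?ltr0n; last lia.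
by rewrite mul1r ler_nat; lia.
Qed.

Lemma mu_inj j k : a != 0 -> (j <= n./2)%N -> (k <= n./2)%N -> mu j = mu k -> j = k.
Proof.
move=> a0 jq kq; rewrite /mu => /addrI /(mulfI _) e.
have /e : 2 * a != 0 by rewrite mulf_eq0 negb_or a0 andbT; apply/eqP => /eqP; lra.
move/cos_inj => /(_ (@kphi_in j jq) (@kphi_in k kq)) /(mulIf _).
have /[swap]/[apply] : phi != 0 by apply/lt0r_neq0/phi_gt0.
by move/eqP; rewrite eqr_nat => /eqP.
Qed.

Lemma cos_lt1 k : a != 0 -> (0 < k <= n./2)%N -> cos (k%:R * phi) < 1.
Proof.
move=> a0 /andP[k0 kq]; rewrite lt_neqAle cos_le1 andbT; apply/eqP => e.
have : mu k = mu 0 by rewrite /mu e mul0r cos0.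
move/(@mu_inj k 0 a0 kq (leq0n _)) => k00; move: k0; rewrite k00.
by [].
Qed.

Lemma Qmu_ck k : a != 0 -> (0 < k <= n./2)%N -> (Q (mu k) = 0 <-> c = ck n a k).
Proof.
move=> a0 kk; have := @cos_lt1 k a0 kk; rewrite /ck -/phi /Q /mu.
set x := cos (k%:R * phi) => x1.
have den : 2 * (n%:R + 1) * a * (x - 1) != 0.
  have := ler0n R n => n0.
  rewrite !mulf_eq0 !negb_or a0 subr_eq0 (lt_eqF x1) /= !andbT; apply/andP; split; apply/eqP; lra.
split => [HQ|->].
  apply: (mulIf den); rewrite divfK //.
  have : (c + 2 * a * x + n%:R * c) * (c + 2 * a * x - c - 2 * a) - n%:R -
    (c * (2 * (n%:R + 1) * a * (x - 1)) - (4 * a ^+ 2 * x * (1 - x) + n%:R)) = 0.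
    by ring.
  by rewrite HQ sub0r => /eqP; rewrite oppr_eq0 subr_eq0 => /eqP.
by field; move: den; rewrite !mulf_eq0 !negb_or => /andP[/andP[/andP[_ ->] ->] ->].
Qed.

Lemma excl j k : a != 0 -> Q (mu j) = 0 -> Q (mu k) = 0 -> mu j != mu k -> False.
Proof.
move=> a0 Hj Hk ne.
have cj := cos_le1 (j%:R * phi); have ck' := cos_le1 (k%:R * phi).
move: Hj Hk ne; rewrite /Q /mu.
set x := cos (j%:R * phi); set y := cos (k%:R * phi) => Hj Hk ne.
have S : (c + 2 * a * x) + (c + 2 * a * y) + (n%:R * c - c - 2 * a) = 0.
  have : (c + 2 * a * x - (c + 2 * a * y)) *
         ((c + 2 * a * x) + (c + 2 * a * y) + (n%:R * c - c - 2 * a)) = 0.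
    have -> : (c + 2 * a * x - (c + 2 * a * y)) *
         ((c + 2 * a * x) + (c + 2 * a * y) + (n%:R * c - c - 2 * a)) =
      ((c + 2 * a * x + n%:R * c) * (c + 2 * a * x - c - 2 * a) - n%:R) -
      ((c + 2 * a * y + n%:R * c) * (c + 2 * a * y - c - 2 * a) - n%:R) by ring.
    by rewrite Hj Hk subrr.
  by move/eqP; rewrite mulf_eq0 subr_eq0 (negbTE ne) /= => /eqP.
have S' : (n%:R + 1) * c - 2 * a * (1 - x - y) = 0 by lra.
have : n%:R = 4 * (a * a) * ((x - 1) * (1 - y)) + 2 * a * (x - 1) * ((n%:R + 1) * c - 2 * a * (1 - x - y)).
  transitivity ((c + 2 * a * x + n%:R * c) * (c + 2 * a * x - c - 2 * a)); first lra.
  ring.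
rewrite S' mulr0 addr0.
have : 0 <= a * a by rewrite -expr2 sqr_ge0.
have : (x - 1) * (1 - y) <= 0 by rewrite mulr_le0_ge0 // ?subr_le0 ?subr_ge0.
have : 0 < n%:R :> R by rewrite ltr0n; lia.
move=> h1 h2 h3 h4.
have : 4 * (a * a) * ((x - 1) * (1 - y)) <= 0.
  by rewrite mulr_ge0_le0 // mulr_ge0.
lra.
Qed.

Lemma roots : exists r1 r2 : R, r1 != r2 /\ forall x, Q x = 0 <-> x = r1 \/ x = r2.
Proof.
pose B := n%:R * c - c - 2 * a. pose C := n%:R * c * (c + 2 * a) + n%:R.
pose D := B ^+ 2 + 4 * C.
have D0 : 0 < D.
  have -> : D = (n%:R * c + c + 2 * a) ^+ 2 + 4 * n%:R by rewrite /D /B /C; ring.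
  have := sqr_ge0 (n%:R * c + c + 2 * a); have : 0 < n%:R :> R by rewrite ltr0n; lia.
  lra.
pose s := Num.sqrt D.
have s0 : 0 < s by rewrite sqrtr_gt0.
have ss : s * s = D by rewrite -expr2 sqr_sqrtr // ltW.
exists ((- B + s) / 2), ((- B - s) / 2); split.
  by apply/eqP => e; lra.
move=> x.
have -> : Q x = (x - (- B + s) / 2) * (x - (- B - s) / 2).
  have : Q x - (x - (- B + s) / 2) * (x - (- B - s) / 2) = (s * s - D) / 4.
    by rewrite /Q /D /B /C; field.
  by rewrite ss subrr mul0r => /subr0_eq.
split.
  by move/eqP; rewrite mulf_eq0 !subr_eq0 => /orP[/eqP|/eqP]; [left|right].
by case => ->; rewrite subrr ?mul0r ?mulr0.
Qed.

Lemma main_sec : (2 < n)%N -> a != 0 -> (b = 1 \/ b = -1) ->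
  num_distinct_eigenvalues (mmat n a b c)
    (if `[< exists k : nat, [/\ (1 <= k)%N, (k <= n./2)%N & c = ck n a k] >]
     then (n./2).+1 else (n./2).+2).
Proof.
move=> _ a0 hb.
have bb : b * b = 1 by case: hb => ->; rewrite ?mulr1 ?mulrNN ?mulr1.
have b0 : b != 0 by apply/eqP => e; move: bb; rewrite e mulr0 => /eqP; rewrite eq_sym oner_eq0.
have n0 : (0 < n)%N by lia.
pose L := map mu (iota 1 n./2).
have inL x : x \in L <-> exists2 k, (0 < k <= n./2)%N & x = mu k.
  split.
    by move/mapP => [k]; rewrite mem_iota => kk ->; exists k => //; lia.
  by move=> [k kk ->]; apply/mapP; exists k => //; rewrite mem_iota; lia.
have uL : uniq L.
  rewrite map_inj_in_uniq ?iota_uniq // => j k; rewrite !mem_iota => hj hk e.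
  by apply: (@mu_inj j k a0 _ _ e); lia.
have eigP x : eigenvalue (mmat n a b c) x <-> Q x = 0 \/ x \in L.
  split.
    move/eigenvalueP => [v Hv vn0].
    case: (pselect (exists k, (0 < k < n)%N /\ x = mu k)) => [[k [kn ->]]|no].
      right; apply/inL; case: (leqP k n./2) => kq.
        by exists k => //; lia.
      by exists (n - k)%N; [lia | rewrite mu_sym //; lia].
    left; apply: (@eig_C x v bb Hv vn0) => k kn; apply/eqP => e; apply: no; by exists k.
  case => [HQ | /inL [k kk ->]]; apply/eigenvalueP.
    exists (qvec x); first exact: q_eig.
    apply/negP => /eqP/rowP/(_ (lift ord0 (Ordinal n0))); rewrite !mxE lift0 /= => /eqP.
    by rewrite (negbTE b0).
  exists (uvec k 0); first by apply: u_eig; lia.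
  apply/negP => /eqP/rowP/(_ (lift ord0 (Ordinal n0))); rewrite !mxE lift0 /= /G subrr mul0r mulr0 cos0 => /eqP.
  by rewrite oner_eq0.
have [r1 [r2 [r12 Hr]]] := roots.
case: asboolP => [[k0 [k1 k2 hc]] | hno].
  have kk0 : (0 < k0 <= n./2)%N by lia.
  have Q0 : Q (mu k0) = 0 by apply/(@Qmu_ck k0 a0 kk0).
  have Hr' : Q (r1 + r2 - mu k0) = 0 /\ r1 + r2 - mu k0 != mu k0.
    case: ((Hr (mu k0)).1 Q0) => ->.
      have -> : r1 + r2 - r1 = r2 by ring.
      by split; [apply/(Hr r2).2; right | rewrite eq_sym].
    have -> : r1 + r2 - r2 = r1 by ring.
    by split; [apply/(Hr r1).2; left | ].
  exists ((r1 + r2 - mu k0) :: L); split.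
  - rewrite /= uL andbT; apply/negP => /inL [j jj e].
    apply: (@excl j k0 a0); [by rewrite -e; exact: Hr'.1 | exact: Q0 | by rewrite -e; exact: Hr'.2].
  - move=> x; rewrite eigP in_cons; split.
      case => [HQ|xL]; last by rewrite xL orbT.
      have [->|ne] := eqVneq x (mu k0).
        by apply/orP; right; apply/inL; exists k0.
      apply/orP; left; apply/eqP.
      case: ((Hr x).1 HQ); case: ((Hr (mu k0)).1 Q0) => e1 e2; move: ne; rewrite e1 e2 ?eqxx // => _; ring.
    case/orP => [/eqP -> | xL]; [by left; exact: Hr'.1 | by right].
  - by rewrite /= /L size_map size_iota.
have nQ k : (0 < k <= n./2)%N -> Q (mu k) != 0.
  move=> kk; apply/eqP => /(@Qmu_ck k a0 kk) hc; apply: hno; exists k; split => //; lia.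
exists [:: r1, r2 & L]; split.
- rewrite /= uL andbT in_cons negb_or r12 /=.
  apply/andP; split; apply/negP => /inL[k kk e]; move: (nQ k kk); rewrite -e => /eqP; apply.
    by apply/(Hr _).2; left.
  by apply/(Hr _).2; right.
- move=> x; rewrite eigP !in_cons; split.
    by case => [/Hr [->|->]|->]; rewrite ?eqxx ?orbT.
  case/orP => [/eqP ->|/orP[/eqP ->| xL]]; [by left; apply/(Hr _).2; left | by left; apply/(Hr _).2; right | by right].
- by rewrite /= /L size_map size_iota.
Qed.

End Mat.

Theorem theorem5 (R : realType) (n : nat) (a b c : R) :
  (2 < n)%N -> a != 0 -> (b = 1 \/ b = -1) ->
  num_distinct_eigenvalues (mmat n a b c)
    (if `[< exists k : nat, [/\ (1 <= k)%N, (k <= n./2)%N & c = ck n a k] >]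
     then (n./2).+1 else (n./2).+2).
Proof. by move=> n2; apply: (@main_sec R n a b c n2 n2). Qed.
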